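(* Let $R>0$ and $\Theta=(\alpha,\rho_r,\rho_d,\rho_s,\rho_0,T)$ with $\alpha>1$, $\rho_r,\rho_d,\rho_s,\rho_0>0$, $T>1$, and with $\beta=\rho_d/\rho_r$, $\delta=\rho_s/\rho_r$, $\mu=\rho_0/\rho_r$ suppose $\min\big(\frac T4,\frac1{3\mu},\frac{3\beta}{2\mu}\big)>10$ and $\rho_r>\frac{\alpha}{2\delta}$. Then $$\frac38\,\zeta'_{csi}\Big(\frac43R,\Theta\Big)<\zeta'_{zf}(R,\Theta)<\zeta'_{csi}(R,\Theta).$$
   Context: $K_{max}(\Theta)=\min\big(\frac T4,\frac{\rho_r}{3\rho_0},\frac{3\rho_d}{2\rho_0}\big)$. For reals $M>K$, $1\le K\le\tau<T$ and rate $r>0$, let $$\gamma_u=\frac{K+\tau}{2\tau(M-K)}\Big(2^{\frac{r}{K(1-\tau/T)}}-1\Big)+\sqrt{\Big(\frac{K+\tau}{2\tau(M-K)}\Big(2^{\frac{r}{K(1-\tau/T)}}-1\Big)\Big)^2+\frac{2^{\frac{r}{K(1-\tau/T)}}-1}{\tau(M-K)}},$$ $$\frac{r}{\zeta_{zf}(M,K,\tau,r,\Theta)}=\alpha K\gamma_u+\rho_s+K\Big(\rho_d+\frac{8K^2\rho_0}{3T}\Big)+M\Big(\rho_r+2K\rho_0+\frac{4K^2\rho_0}{T}\Big).$$ $\zeta'_{zf}(r,\Theta)$ is the supremum of $\zeta_{zf}(M,K,\tau,r,\Theta)$ over real $(M,K,\tau)$ with $1\le K\le K_{max}(\Theta)$,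 $K\le\tau<T$, $M>K$. For real $M>K\ge1$, $\frac{1}{\zeta_{csi}(M,K,r,\Theta)}=\frac1r\big[\frac{\alpha K}{M-K}(2^{r/K}-1)+M\rho_r+K\rho_d+\rho_s\big]$, and $\zeta'_{csi}(r,\Theta)$ is the maximum of $\zeta_{csi}(M,K,r,\Theta)$ over real $(M,K)$ with $1\le K\le K_{max}(\Theta)$, $M>K$. *)

(* Defs.v *)
From Stdlib Require Import Reals.
From Coquelicot Require Import Coquelicot.
Open Scope R_scope.

Record Theta := mkTheta {
  alpha : R; rho_r : R; rho_d : R; rho_s : R; rho_0 : R; TT : R }.

Definition Kmax (th : Theta) : R :=
  Rmin (TT th / 4) (Rmin (rho_r th / (3 * rho_0 th)) (3 * rho_d th / (2 * rho_0 th))).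

Definition pow2 (x : R) : R := Rpower 2 x.

Definition gamma_u (th : Theta) (M K tau r : R) : R :=
  let e := pow2 (r / (K * (1 - tau / TT th))) - 1 in
  let a := (K + tau) / (2 * tau * (M - K)) * e in
  a + sqrt (a ^ 2 + e / (tau * (M - K))).

Definition denom_zf (th : Theta) (M K tau r : R) : R :=
  alpha th * K * gamma_u th M K tau r + rho_s th
  + K * (rho_d th + 8 * K ^ 2 * rho_0 th / (3 * TT th))
  + M * (rho_r th + 2 * K * rho_0 th + 4 * K ^ 2 * rho_0 th / TT th).

Definition zeta_zf (th : Theta) (M K tau r : R) : R :=
  r / denom_zf th M K tau r.

Definition zeta_zf' (r : R) (th : Theta) : Rbar :=
  Lub_Rbar (fun z => exists M K tau,
    1 <= K /\ K <= Kmax th /\ K <= tau /\ tau < TT th /\ K < M /\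
    z = zeta_zf th M K tau r).

Definition zeta_csi (th : Theta) (M K r : R) : R :=
  / ((1 / r) * (alpha th * K / (M - K) * (pow2 (r / K) - 1)
                + M * rho_r th + K * rho_d th + rho_s th)).

(* zeta'_csi(r, Theta): the maximum (taken as supremum) over real (M,K)
   with 1 <= K <= Kmax, M > K *)
Definition zeta_csi' (r : R) (th : Theta) : Rbar :=
  Lub_Rbar (fun z => exists M K,
    1 <= K /\ K <= Kmax th /\ K < M /\ z = zeta_csi th M K r).

(* Main.v *)
Require Import Defs.
From Stdlib Require Import Reals Lra Psatz Classical.
From Coquelicot Require Import Coquelicot.
Open Scope R_scope.

Definition good th := 1 < alpha th /\ 0 < rho_r th /\ 0 < rho_d th /\ 0 < rho_s th /\ 0 < rho_0 th /\ 1 < TT th.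

Definition Dcsi (th : Theta) (M K r : R) : R := alpha th * K / (M - K) * (Defs.pow2 (r / K) - 1) + M * rho_r th + K * rho_d th + rho_s th.

Lemma pow2_gt1 x : 0 < x -> 1 < Defs.pow2 x.
Proof. intro. unfold Defs.pow2. rewrite <- (Rpower_O 2) by lra. apply Rpower_lt; lra. Qed.

Lemma pow2_le x y : x <= y -> Defs.pow2 x <= Defs.pow2 y.
Proof. intro. unfold Defs.pow2. apply Rle_Rpower; lra. Qed.

Lemma Kfacts th K : good th -> K <= Kmax th ->
  K <= TT th / 4 /\ 3 * rho_0 th * K <= rho_r th /\ 2 * rho_0 th * K <= 3 * rho_d th.
Proof.
  intros (Ha&Hr&Hd&Hs&H0&HT) HK. unfold Kmax in HK.
  pose proof (Rmin_l (TT th / 4) (Rmin (rho_r th / (3 * rho_0 th)) (3 * rho_d th / (2 * rho_0 th)))).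
  pose proof (Rmin_r (TT th / 4) (Rmin (rho_r th / (3 * rho_0 th)) (3 * rho_d th / (2 * rho_0 th)))).
  pose proof (Rmin_l (rho_r th / (3 * rho_0 th)) (3 * rho_d th / (2 * rho_0 th))).
  pose proof (Rmin_r (rho_r th / (3 * rho_0 th)) (3 * rho_d th / (2 * rho_0 th))).
  split; [lra|split].
  - assert (H5 : K <= rho_r th / (3 * rho_0 th)) by lra.
    apply Rmult_le_compat_l with (r := 3 * rho_0 th) in H5; [|lra].
    replace (3 * rho_0 th * (rho_r th / (3 * rho_0 th))) with (rho_r th) in H5 by (field; lra). lra.
  - assert (H5 : K <= 3 * rho_d th / (2 * rho_0 th)) by lra.
    apply Rmult_le_compat_l with (r := 2 * rho_0 th) in H5; [|lra].
    replace (2 * rho_0 th * (3 * rho_d th / (2 * rho_0 th))) with (3 * rho_d th) in H5 by (field; lra). lra.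
Qed.

Lemma Dcsi_ge th M K r : good th -> 0 < r -> 1 <= K -> K < M -> rho_s th <= Dcsi th M K r.
Proof.
  intros (Ha&Hr&Hd&Hs&H0&HT) Hr0 HK HM. unfold Dcsi.
  assert (1 < Defs.pow2 (r / K)) by (apply pow2_gt1; apply Rdiv_lt_0_compat; lra).
  assert (0 <= alpha th * K / (M - K)) by (apply Rmult_le_pos; [nra| left; apply Rinv_0_lt_compat; lra]).
  nra.
Qed.

Lemma zeta_csi_eq th M K r : good th -> 0 < r -> 1 <= K -> K < M ->
  zeta_csi th M K r = r / Dcsi th M K r.
Proof.
  intros G Hr HK HM. pose proof (Dcsi_ge th M K r G Hr HK HM). destruct G as (?&?&?&?&?&?).
  unfold zeta_csi. fold (Dcsi th M K r). field. split; lra.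
Qed.

Lemma zf_upper th M K tau r : good th -> 0 < r -> 1 <= K -> K <= Kmax th -> K <= tau ->
  tau < TT th -> K < M -> Dcsi th M K r + 2 * rho_0 th <= denom_zf th M K tau r.
Proof.
  intros G Hr0 HK HKm Ht HtT HM. pose proof (Kfacts th K G HKm) as (F1&F2&F3).
  destruct G as (Ha&Hr&Hd&Hs&H0&HT).
  unfold denom_zf, gamma_u, Dcsi. cbv zeta.
  set (e := Defs.pow2 (r / K) - 1).
  set (ez := Defs.pow2 (r / (K * (1 - tau / TT th))) - 1).
  assert (He : 0 < e) by (assert (1 < Defs.pow2 (r / K)) by (apply pow2_gt1; apply Rdiv_lt_0_compat; lra); unfold e; lra).
  assert (Hq : 0 < 1 - tau / TT th /\ 1 - tau / TT th <= 1).
  { assert (0 < tau / TT th) by (apply Rdiv_lt_0_compat; lra).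
    assert (tau / TT th * TT th = tau) by (field; lra). nra. }
  assert (Hez : e <= ez).
  { unfold e, ez. apply Rplus_le_compat_r. apply pow2_le.
    set (q := 1 - tau / TT th) in *.
    assert (0 < r / (K * q)) by (apply Rdiv_lt_0_compat; nra).
    replace (r / K) with (r / (K * q) * q) by (field; split; lra). nra. }
  set (a := (K + tau) / (2 * tau * (M - K)) * ez).
  set (b := ez / (tau * (M - K))).
  assert (Ha2 : e / (M - K) <= 2 * a).
  { replace (2 * a) with ((K + tau) / tau * (ez / (M - K))) by (unfold a; field; lra).
    assert (1 <= (K + tau) / tau) by (apply Rle_div_r; lra).
    assert (e / (M - K) <= ez / (M - K)) by (apply Rmult_le_compat_r; [left; apply Rinv_0_lt_compat; lra| lra]).
    assert (0 <= e / (M - K)) by (apply Rdiv_le_0_compat; lra). nra. }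
  assert (Hb : 0 <= b) by (unfold b; apply Rdiv_le_0_compat; nra).
  assert (Ha0 : 0 <= a) by (assert (0 <= e / (M - K)) by (apply Rdiv_le_0_compat; lra); lra).
  assert (Hs2 : a <= sqrt (a ^ 2 + b)).
  { rewrite <- (sqrt_pow2 a) at 1 by lra. apply sqrt_le_1_alt. lra. }
  replace (alpha th * K / (M - K) * e) with (alpha th * K * (e / (M - K))) by (field; lra).
  assert (alpha th * K * (e / (M - K)) <= alpha th * K * (a + sqrt (a ^ 2 + b))).
  { apply Rmult_le_compat_l; nra. }
  assert (0 <= 8 * K ^ 2 * rho_0 th / (3 * TT th)) by (apply Rdiv_le_0_compat; nra).
  assert (0 <= 4 * K ^ 2 * rho_0 th / TT th) by (apply Rdiv_le_0_compat; nra).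
  set (X := 8 * K ^ 2 * rho_0 th / (3 * TT th)) in *.
  set (Y := 4 * K ^ 2 * rho_0 th / TT th) in *.
  assert (0 <= K * X) by nra. assert (0 <= M * Y) by nra.
  assert (1 <= M * K) by nra. assert (2 * rho_0 th <= M * (2 * K * rho_0 th)) by nra.
  nra.
Qed.
Lemma zf_lower th M K r : good th -> 0 < r -> 1 <= K -> K <= Kmax th -> K < M ->
  denom_zf th M K (TT th / 4) r <= 2 * Dcsi th M K (4/3*r) - (rho_s th - alpha th / 2).
Proof.
  intros G Hr0 HK HKm HM. pose proof (Kfacts th K G HKm) as (F1&F2&F3).
  destruct G as (Ha&Hr&Hd&Hs&H0&HT).
  unfold denom_zf, gamma_u, Dcsi. cbv zeta.
  replace (r / (K * (1 - TT th / 4 / TT th))) with (4/3*r/K) by (field; lra).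
  set (e := Defs.pow2 (4/3*r / K) - 1).
  assert (He : 0 < e) by (assert (1 < Defs.pow2 (4/3*r / K)) by (apply pow2_gt1; apply Rdiv_lt_0_compat; lra); unfold e; lra).
  set (tau := TT th / 4) in *.
  set (a := (K + tau) / (2 * tau * (M - K)) * e).
  set (b := e / (tau * (M - K))).
  assert (Ha0 : 0 < a) by (unfold a; apply Rmult_lt_0_compat; [apply Rdiv_lt_0_compat; nra|lra]).
  assert (Hb0 : 0 < b) by (unfold b; apply Rdiv_lt_0_compat; nra).
  assert (Hsq : sqrt (a ^ 2 + b) <= a + b / (2 * a)).
  { assert (0 < b / (2 * a)) by (apply Rdiv_lt_0_compat; lra).
    rewrite <- (sqrt_pow2 (a + b / (2 * a))) by lra. apply sqrt_le_1_alt.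
    replace ((a + b / (2 * a)) ^ 2) with (a ^ 2 + b + (b / (2 * a)) ^ 2) by (field; lra).
    nra. }
  assert (Hb : b / (2 * a) = 1 / (K + tau)) by (unfold a, b; field; repeat split; lra).
  assert (H2a : 2 * a <= 2 * (e / (M - K))).
  { replace (2 * a) with ((K + tau) / tau * (e / (M - K))) by (unfold a; field; lra).
    assert ((K + tau) / tau <= 2) by (apply Rle_div_l; lra).
    assert (0 <= e / (M - K)) by (apply Rdiv_le_0_compat; lra). nra. }
  assert (HKt : K * (1 / (K + tau)) <= 1 / 2).
  { replace (K * (1 / (K + tau))) with (K / (K + tau)) by (field; lra).
    apply Rle_div_l; lra. }
  replace (alpha th * K / (M - K) * e) with (alpha th * K * (e / (M - K))) by (field; lra).
  assert (alpha th * K * (a + sqrt (a ^ 2 + b)) <= alpha th * K * (2 * (e / (M - K))) + alpha th / 2).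
  { assert (a + sqrt (a ^ 2 + b) <= 2 * (e / (M - K)) + 1 / (K + tau)) by lra.
    assert (alpha th * K * (a + sqrt (a ^ 2 + b)) <= alpha th * K * (2 * (e / (M - K)) + 1 / (K + tau))) by (apply Rmult_le_compat_l; nra).
    nra. }
  assert (HKT : K / TT th <= 1 / 4).
  { unfold tau in F1. apply Rle_div_l; lra. }
  assert (8 * K ^ 2 * rho_0 th / (3 * TT th) <= rho_d th).
  { replace (8 * K ^ 2 * rho_0 th / (3 * TT th)) with (8/3 * (K * rho_0 th) * (K / TT th)) by (field; lra).
    assert (0 <= K * rho_0 th) by nra. nra. }
  assert (2 * K * rho_0 th + 4 * K ^ 2 * rho_0 th / TT th <= rho_r th).
  { replace (4 * K ^ 2 * rho_0 th / TT th) with (4 * (K * rho_0 th) * (K / TT th)) by (field; lra).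
    assert (0 <= K * rho_0 th) by nra. nra. }
  set (X := 8 * K ^ 2 * rho_0 th / (3 * TT th)) in *.
  set (Y := 4 * K ^ 2 * rho_0 th / TT th) in *.
  assert (K * (rho_d th + X) <= 2 * K * rho_d th) by nra.
  assert (M * (rho_r th + 2 * K * rho_0 th + Y) <= 2 * M * rho_r th) by nra.
  nra.
Qed.

Lemma lub_fin (E : R -> Prop) x0 B : E x0 -> (forall z, E z -> z <= B) ->
  exists s, Lub_Rbar E = Finite s /\ (forall z, E z -> z <= s) /\
    (forall y, y < s -> exists z, E z /\ y < z).
Proof.
  intros H0 HB. destruct (Lub_Rbar_correct E) as [Hub Hl].
  destruct (Lub_Rbar E) as [s| |] eqn:Heq.
  - exists s. split; [reflexivity|split].
    + intros z Hz. exact (Hub z Hz).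
    + intros y Hy. apply NNPP. intro Hn.
      assert (Hy' : is_ub_Rbar E (Finite y)).
      { intros z Hz. simpl. apply Rnot_lt_le. intro. apply Hn. exists z. auto. }
      specialize (Hl _ Hy'). simpl in Hl. lra.
  - exfalso. assert (Hb : is_ub_Rbar E (Finite B)) by (intros z Hz; simpl; auto).
    specialize (Hl _ Hb). simpl in Hl. exact Hl.
  - exfalso. specialize (Hub x0 H0). simpl in Hub. exact Hub.
Qed.

Lemma csi_sup th r : good th -> 0 < r -> 1 <= Kmax th -> exists s,
  zeta_csi' r th = Finite s /\ 0 < s /\
  (forall M K, 1 <= K -> K <= Kmax th -> K < M -> r / Dcsi th M K r <= s) /\
  (forall y, y < s -> exists M K, 1 <= K /\ K <= Kmax th /\ K < M /\ y < r / Dcsi th M K r).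
Proof.
  intros G Hr HK.
  assert (Hs : 0 < rho_s th) by (destruct G as (?&?&?&?&?&?); auto).
  destruct (lub_fin (fun z => exists M K,
    1 <= K /\ K <= Kmax th /\ K < M /\ z = zeta_csi th M K r) (zeta_csi th 2 1 r) (r / rho_s th))
    as (s & Hs1 & Hs2 & Hs3).
  - exists 2, 1. repeat split; lra.
  - intros z (M & K & H1 & H2 & H3 & ->). rewrite zeta_csi_eq by auto.
    pose proof (Dcsi_ge th M K r G Hr H1 H3).
    apply Rmult_le_compat_l; [lra|]. apply Rinv_le_contravar; lra.
  - exists s. split; [exact Hs1|]. split; [|split].
    + assert (H12 : 1 < 2) by lra.
      assert (Hz := Hs2 (zeta_csi th 2 1 r) (ex_intro _ 2 (ex_intro _ 1 (conj (Rle_refl 1) (conj HK (conj H12 eq_refl)))))).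
      rewrite zeta_csi_eq in Hz by (auto; lra).
      pose proof (Dcsi_ge th 2 1 r G Hr (Rle_refl 1) H12).
      assert (0 < r / Dcsi th 2 1 r) by (apply Rdiv_lt_0_compat; lra). lra.
    + intros M K H1 H2 H3. rewrite <- zeta_csi_eq by auto. apply Hs2. exists M, K. auto.
    + intros y Hy. destruct (Hs3 y Hy) as (z & (M & K & H1 & H2 & H3 & ->) & Hyz).
      exists M, K. rewrite <- zeta_csi_eq by auto. auto.
Qed.

Theorem corollary1 (Rr alpha0 rr rd rs r0 T : R) :
  0 < Rr ->
  1 < alpha0 -> 0 < rr -> 0 < rd -> 0 < rs -> 0 < r0 -> 1 < T ->
  (let beta := rd / rr in let delta := rs / rr in let mu := r0 / rr in
   Rmin (T / 4) (Rmin (1 / (3 * mu)) (3 * beta / (2 * mu))) > 10 /\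
   rr > alpha0 / (2 * delta)) ->
  let th := mkTheta alpha0 rr rd rs r0 T in
  Rbar_lt (Rbar_mult (Finite (3 / 8)) (zeta_csi' (4 / 3 * Rr) th)) (zeta_zf' Rr th) /\
  Rbar_lt (zeta_zf' Rr th) (zeta_csi' Rr th).
Proof.
  intros HR Ha Hr Hd Hs H0 HT Hc. cbv zeta in Hc |- *. destruct Hc as [Hmin Hrs].
  set (th := mkTheta alpha0 rr rd rs r0 T).
  assert (G : good th) by (unfold good; simpl; lra).
  assert (Hsp : rho_s th = rs) by reflexivity.
  assert (H0p : rho_0 th = r0) by reflexivity.
  assert (Hap : alpha th = alpha0) by reflexivity.
  assert (HKm : 10 < Kmax th).
  { unfold Kmax; simpl.
    replace (1 / (3 * (r0 / rr))) with (rr / (3 * r0)) in Hmin by (field; lra).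
    replace (3 * (rd / rr) / (2 * (r0 / rr))) with (3 * rd / (2 * r0)) in Hmin by (field; lra).
    lra. }
  assert (Hc : 0 < rs - alpha0 / 2).
  { replace (alpha0 / (2 * (rs / rr))) with (alpha0 * rr / (2 * rs)) in Hrs by (field; lra).
    assert (alpha0 * rr / (2 * rs) * (2 * rs) = alpha0 * rr) by (field; lra). nra. }
  split.
  - assert (HR' : 0 < 4 / 3 * Rr) by lra.
    destruct (csi_sup th (4/3*Rr) G HR' ltac:(lra)) as (s & Hs1 & Hs0 & Hs2 & Hs3).
    rewrite Hs1. simpl Rbar_mult.
    set (c := rs - alpha0 / 2) in *.
    set (P := 4 * Rr / (3 * s) + c / 2).
    assert (HP : 0 < P) by (unfold P; assert (0 < 4 * Rr / (3 * s)) by (apply Rdiv_lt_0_compat; lra); lra).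
    assert (Hy : (4/3*Rr) / P < s).
    { apply Rlt_div_l; [lra|]. unfold P.
      replace (s * (4 * Rr / (3 * s) + c / 2)) with (4/3*Rr + s * c / 2) by (field; lra).
      nra. }
    destruct (Hs3 _ Hy) as (M & K & H1 & H2 & H3 & H4).
    pose proof (Kfacts th K G H2) as (F1 & _ & _).
    pose proof (Dcsi_ge th M K (4/3*Rr) G HR' H1 H3) as HD.
    set (D := Dcsi th M K (4/3*Rr)) in *.
    assert (HDP : D < P).
    { apply Rmult_lt_compat_r with (r := D) in H4; [|lra].
      replace (4/3*Rr / D * D) with (4/3*Rr) in H4 by (field; lra).
      replace (4/3*Rr / P * D) with ((4/3*Rr) * D / P) in H4 by (field; lra).
      assert (4/3*Rr*D/P * P = 4/3*Rr*D) by (field; lra).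
      assert (4/3*Rr*D < 4/3*Rr*P) by nra. nra. }
    pose proof (zf_lower th M K Rr G HR H1 H2 H3) as Hlow.
    assert (Htau : K <= TT th / 4) by exact F1.
    assert (HtT : TT th / 4 < TT th) by (simpl; lra).
    pose proof (zf_upper th M K (TT th / 4) Rr G HR H1 H2 Htau HtT H3) as Hup.
    pose proof (Dcsi_ge th M K Rr G HR H1 H3).
    fold D in Hlow. rewrite Hsp, Hap in Hlow.
    set (Z := denom_zf th M K (TT th / 4) Rr) in *.
    assert (HZ : Z < 8 * Rr / (3 * s)).
    { unfold P in HDP. unfold c in *.
      replace (8 * Rr / (3 * s)) with (2 * (4 * Rr / (3 * s))) by (field; lra). lra. }
    apply Rbar_lt_le_trans with (y := Finite (Rr / Z)).
    + simpl. assert (0 < Z) by lra.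
      replace (3 / 8 * s) with (Rr / (8 * Rr / (3 * s))) by (field; lra).
      apply Rmult_lt_compat_l; [lra|]. apply Rinv_lt_contravar; [nra|lra].
    + destruct (Lub_Rbar_correct (fun z => exists M K tau,
        1 <= K /\ K <= Kmax th /\ K <= tau /\ tau < TT th /\ K < M /\
        z = zeta_zf th M K tau Rr)) as [Hub _].
      apply Hub. exists M, K, (TT th / 4). repeat split; auto.
  - destruct (csi_sup th Rr G HR ltac:(lra)) as (s & Hs1 & Hs0 & Hs2 & _).
    rewrite Hs1.
    set (u := Rr / (Rr / s + 2 * r0)).
    assert (Hus : u < s).
    { unfold u. assert (0 < Rr / s) by (apply Rdiv_lt_0_compat; lra).
      apply Rlt_div_l; [lra|].
      replace (s * (Rr / s + 2 * r0)) with (Rr + 2 * r0 * s) by (field; lra). nra. }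
    apply Rbar_le_lt_trans with (y := Finite u); [|simpl; exact Hus].
    destruct (Lub_Rbar_correct (fun z => exists M K tau,
        1 <= K /\ K <= Kmax th /\ K <= tau /\ tau < TT th /\ K < M /\
        z = zeta_zf th M K tau Rr)) as [_ Hl].
    apply Hl. intros x (M & K & tau & H1 & H2 & H3 & H4 & H5 & ->).
    simpl. unfold zeta_zf.
    pose proof (zf_upper th M K tau Rr G HR H1 H2 H3 H4 H5) as Hup.
    pose proof (Dcsi_ge th M K Rr G HR H1 H5).
    pose proof (Hs2 M K H1 H2 H5) as Hb.
    set (D := Dcsi th M K Rr) in *. simpl in Hup.
    assert (HDs : Rr / s <= D).
    { apply Rle_div_l; [lra|].
      apply Rmult_le_compat_r with (r := D) in Hb; [|lra].
      replace (Rr / D * D) with Rr in Hb by (field; lra). lra. }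
    unfold u. apply Rmult_le_compat_l; [lra|].
    assert (0 < Rr / s) by (apply Rdiv_lt_0_compat; lra).
    apply Rinv_le_contravar; lra.
Qed.
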